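(* Let $\sigma\in S_t$, $p\in S_k$ and $1\le s\le k$. (i) If for each $a\le s$ the word $p_ap_{a+1}\cdots p_{\min(a+t-1,k)}$ is not order-isomorphic to $\sigma_1\sigma_2\cdots\sigma_{\min(t,k-a+1)}$, then $\{1,2,\dots,s\}$ is reversibly deletable for $p$ with respect to $\{(\sigma,[t-1])\}$. (ii) If for each $a\le s$ the word $p_ap_{a+1}\cdots p_{\min(a+t-2,k)}$ is not order-isomorphic to $\sigma_1\sigma_2\cdots\sigma_{\min(t-1,k-a+1)}$, then $\{1,2,\dots,s\}$ is reversibly deletable for $p$ with respect to $\{(\sigma,[t-2])\}$.
   Context: Two words of distinct integers are order-isomorphic if they reduce to the same permutation. A vincular pattern $(\sigma,X)$, $\sigma\in S_\ell$, $X\subseteq[\ell-1]$, is contained in $\pi$ if some subsequence $\pi_{i_1}\cdots\pi_{i_\ell}$ ($i_1<\dots<i_\ell$) is order-isomorphic to $\sigma$ with $i_{x+1}=i_x+1$ for $x\in X$. For $p\in S_k$ and $w\in[n]^k$ with distinct letters order-isomorphic to $p$, $S_n^B(p;w)$ is the set of $B$-avoiding $\pi\in S_n$ with $\pi_i=w_i$ ($i\le k$). $d_R$ deletes entries in positions $R$ and reduces (for words: subtract from each remaining letter the number of deleted letters smaller than it). $R\subseteq[k]$ is reversibly deletable for $p$ w.r.t. $B$ if for every $n$ and $w$ with $S_n^B(p;w)\ne\emptyset$, $d_R$ is a bijection $S_n^B(p;w)\to S_{n-|R|}^B(d_R(p);d_R(w))$. *)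

(* Defs.v *)
From mathcomp Require Import all_boot.
Set Implicit Arguments. Unset Strict Implicit. Unset Printing Implicit Defensive.

Definition is_perm (n : nat) (pi : seq nat) : Prop := perm_eq pi (iota 1 n).

Definition order_iso (u v : seq nat) : Prop :=
  size u = size v /\
  forall i j, i < size u -> j < size u ->
    (nth 0 u i < nth 0 u j) = (nth 0 v i < nth 0 v j).

(* vincular pattern (sigma, X): X is a list of (1-based) adjacency
   positions x in [l-1] forcing i_{x+1} = i_x + 1. Positions of pi are
   0-based in idx. *)
Definition contains_vinc (sigma : seq nat) (X : seq nat) (pi : seq nat) : Prop :=
  exists idx : seq nat,
    [/\ size idx = size sigma,
        sorted ltn idx,
        all (fun i => i < size pi) idx,
        order_iso [seq nth 0 pi i | i <- idx] sigma &
        forall x, x \in X -> 1 <= x -> x < size sigma ->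
          nth 0 idx x = (nth 0 idx x.-1).+1].

Definition avoids (B : seq (seq nat * seq nat)) (pi : seq nat) : Prop :=
  forall sX, sX \in B -> ~ contains_vinc sX.1 sX.2 pi.

(* membership in S_n^B(p; w): B-avoiding permutations of S_n with prefix w
   (the set does not depend on p beyond the standing condition on w) *)
Definition SnB (n : nat) (B : seq (seq nat * seq nat)) (w pi : seq nat) : Prop :=
  [/\ is_perm n pi, avoids B pi & forall i, i < size w -> nth 0 pi i = nth 0 w i].

(* d_R : delete the entries in (1-based) positions R and reduce: subtract
   from each remaining letter the number of deleted letters smaller than it *)
Definition dR (R : seq nat) (u : seq nat) : seq nat :=
  let D := [seq nth 0 u i | i <- iota 0 (size u) & i.+1 \in R] in
  [seq nth 0 u i - count (fun y => y < nth 0 u i) D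
     | i <- iota 0 (size u) & i.+1 \notin R].

Definition admissible_word (n k : nat) (p w : seq nat) : Prop :=
  [/\ size w = k, all (fun x => 0 < x <= n) w, uniq w & order_iso w p].

Definition rev_deletable (k : nat) (p : seq nat) (R : seq nat)
    (B : seq (seq nat * seq nat)) : Prop :=
  forall n w, admissible_word n k p w ->
    (exists pi, SnB n B w pi) ->
    [/\ (forall pi, SnB n B w pi -> SnB (n - size R) B (dR R w) (dR R pi)),
        (forall pi1 pi2, SnB n B w pi1 -> SnB n B w pi2 ->
            dR R pi1 = dR R pi2 -> pi1 = pi2) &
        (forall tau, SnB (n - size R) B (dR R w) tau ->
            exists2 pi, SnB n B w pi & dR R pi = tau)].

(* Main.v *)
Require Import Defs.
From mathcomp Require Import all_boot.
From mathcomp Require zify.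
From Stdlib Require Import Lia.


Lemma perm_props n pi : is_perm n pi ->
  [/\ uniq pi, size pi = n & forall x, x \in pi -> 0 < x <= n].
Proof.
move=> H; split; first by rewrite (perm_uniq H) iota_uniq.
  by rewrite (perm_size H) size_iota.
by move=> x; rewrite (perm_mem H) mem_iota; lia.
Qed.

Lemma props_perm n pi : uniq pi -> size pi = n ->
  (forall x, x \in pi -> 0 < x <= n) -> is_perm n pi.
Proof.
move=> U S R; apply: uniq_perm; rewrite ?iota_uniq //.
have sub : {subset pi <= iota 1 n}.
  by move=> x /R; rewrite mem_iota; lia.
have [] := uniq_min_size U sub; first by rewrite size_iota S.
by move=> _.
Qed.

Definition red (D : seq nat) (x : nat) := x - count (fun y => y < x) D.

Lemma count_between D a b : uniq D ->
  count (fun y => a <= y < b) D <= b - a.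
Proof.
move=> U; rewrite -size_filter.
have -> : b - a = size (iota a (b - a)) by rewrite size_iota.
apply: uniq_leq_size; first exact: filter_uniq.
move=> y; rewrite mem_filter mem_iota => /andP [/andP [H1 H2] _].
apply/andP; split => //; lia.
Qed.

Lemma count_lt_le D x : uniq D -> count (fun y => y < x) D <= x.
Proof.
move=> U; have := count_between D 0 x U; rewrite subn0.
by rewrite (eq_count (a2 := fun y => y < x)).
Qed.

Lemma count_lt_pos D x : uniq D -> (forall y, y \in D -> 0 < y) ->
  count (fun y => y < x) D <= x.-1.
Proof.
move=> U P; have := count_between D 1 x U.
rewrite (eq_in_count (a2 := fun y => y < x)); first by rewrite -subn1.
by move=> y /P; case: y.
Qed.

Lemma count_split D x y : x <= y ->
  count (fun z => z < y) D = count (fun z => z < x) D + count (fun z => x <= z < y) D.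
Proof.
move=> le; elim: D => //= z D ->.
case: (ltnP z x) => h1; case: (ltnP z y) => h2 /=; try lia.
Qed.

Lemma red_mono D x y : uniq D -> x \notin D -> x < y -> red D x < red D y.
Proof.
move=> U nx lt; rewrite /red (count_split D x y (ltnW lt)).
have c1 := count_lt_le D x U.
have c2 := count_lt_le D y U.
rewrite (count_split D x y (ltnW lt)) in c2.
have c3 : count (fun z => x <= z < y) D <= y - x.+1.
  rewrite (eq_in_count (a2 := fun z => x.+1 <= z < y)); first exact: count_between.
  move=> z zD; have : z != x by apply/eqP => e; rewrite -e zD in nx.
  move=> /eqP ne; apply/idP/idP; lia.
lia.
Qed.

Lemma red_lt D x y : uniq D -> x \notin D -> y \notin D ->
  (red D x < red D y) = (x < y).
Proof.
move=> U nx ny; case: (ltngtP x y) => h.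
- exact: red_mono.
- by have := red_mono D y x U ny h; lia.
- by rewrite h ltnn.
Qed.

Lemma red_inj D x y : uniq D -> x \notin D -> y \notin D -> red D x = red D y -> x = y.
Proof.
move=> U nx ny e; case: (ltngtP x y) => h //.
- by have := red_mono D x y U nx h; lia.
- by have := red_mono D y x U ny h; lia.
Qed.

Lemma red_range D n x : uniq D -> (forall y, y \in D -> 0 < y <= n) ->
  x \notin D -> 0 < x <= n -> 0 < red D x <= n - size D.
Proof.
move=> U R nx xr.
have c1 : count (fun y => y < x) D <= x.-1.
  by apply: count_lt_pos => // y /R; lia.
have c2 : count (predC (fun y => y < x)) D <= n - x.
  rewrite (eq_in_count (a2 := fun y => x.+1 <= y < n.+1)).
    by apply: leq_trans (count_between D x.+1 n.+1 U) _; rewrite subSS.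
  move=> z zD; have : z != x by apply/eqP => e; rewrite -e zD in nx.
  move=> /eqP ne /=; have := R z zD; move=> h; apply/idP/idP; lia.
have := count_predC (fun y => y < x) D.
rewrite /red -subn1 in c1 *; move: xr => /andP [x1 x2] cp; move: c1 c2 cp; set c := count _ D; set c3 := count _ D; move=> c1 c2 cp; clearbody c c3; move: x1 x2 c1 c2 cp; move: c c3 (size D); move: (x : nat) => xx; clear; move=> c c3 d *; apply/andP; split; lia.
Qed.

Lemma oi_map_red D l v : uniq D -> (forall x, x \in l -> x \notin D) ->
  order_iso (map (red D) l) v <-> order_iso l v.
Proof.
move=> U N; rewrite /order_iso size_map; split=> [[S H]|[S H]]; split=> // i j hi hj.
- rewrite -H ?size_map // !(nth_map 0) // red_lt //; exact/N/mem_nth.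
- rewrite -H // !(nth_map 0) // red_lt //; exact/N/mem_nth.
Qed.


Lemma map_nth_iota (u : seq nat) a m : a + m <= size u ->
  [seq nth 0 u i | i <- iota a m] = take m (drop a u).
Proof.
move=> h; apply: (@eq_from_nth _ 0).
  rewrite size_map size_iota size_take size_drop; case: ltnP; lia.
move=> i; rewrite size_map size_iota => hi.
by rewrite (nth_map 0) ?size_iota // nth_iota // nth_take // nth_drop.
Qed.

Lemma dR_prefix s u : s <= size u -> dR (iota 1 s) u = map (red (take s u)) (drop s u).
Proof.
move=> h; rewrite /dR.
have e0 : iota 0 (size u) = iota 0 s ++ iota s (size u - s).
  by rewrite -iotaD subnKC.
have e1 : [seq i <- iota 0 (size u) | i.+1 \in iota 1 s] = iota 0 s.
  rewrite e0 filter_cat (eq_in_filter (a2 := predT)); last first.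
    by move=> i; rewrite !mem_iota /= => hi; lia.
  rewrite filter_predT (eq_in_filter (a2 := pred0)); last first.
    by move=> i; rewrite !mem_iota /= => hi; apply/negbTE; lia.
  by rewrite filter_pred0 cats0.
have e2 : [seq i <- iota 0 (size u) | i.+1 \notin iota 1 s] = iota s (size u - s).
  rewrite e0 filter_cat (eq_in_filter (a2 := pred0)); last first.
    by move=> i; rewrite !mem_iota /= => hi; apply/negbTE; lia.
  rewrite filter_pred0 (eq_in_filter (a2 := predT)); last first.
    by move=> i; rewrite !mem_iota /= => hi; lia.
  by rewrite filter_predT.
rewrite e1 e2 map_nth_iota ?drop0 //.
have -> : [seq nth 0 u i - count (fun y => y < nth 0 u i) (take s u) | i <- iota s (size u - s)]
   = map (red (take s u)) [seq nth 0 u i | i <- iota s (size u - s)] by rewrite -map_comp.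
rewrite map_nth_iota; last by rewrite subnKC.
by rewrite (@take_oversize _ (size u - s) (drop s u)) ?size_drop.
Qed.


Definition occ (sigma X pi idx : seq nat) : Prop :=
  [/\ size idx = size sigma,
        sorted ltn idx,
        all (fun i => i < size pi) idx,
        order_iso [seq nth 0 pi i | i <- idx] sigma &
        forall x, x \in X -> 1 <= x -> x < size sigma ->
          nth 0 idx x = (nth 0 idx x.-1).+1].

Lemma notD (pi : seq nat) s x : uniq pi -> x \in drop s pi -> x \notin take s pi.
Proof.
move=> U xd; have : uniq (take s pi ++ drop s pi) by rewrite cat_take_drop.
rewrite cat_uniq => /and3P [_ /hasPn H _].
exact: H.
Qed.

Lemma occ_shift sigma X (pi : seq nat) s idx : uniq pi -> s <= size pi ->
  occ sigma X pi (map (addn s) idx) <->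
  occ sigma X (map (red (take s pi)) (drop s pi)) idx.
Proof.
move=> U hs.
have Eall : all (fun i => i < size pi) (map (addn s) idx) =
            all (fun i => i < size (map (red (take s pi)) (drop s pi))) idx.
  rewrite all_map size_map size_drop; apply: eq_all => i /=; apply/idP/idP; lia.
have Esort : sorted ltn (map (addn s) idx) = sorted ltn idx.
  rewrite sorted_map; apply/idP/idP; apply: sub_sorted => x y /=; by rewrite ltn_add2l.
have Eoi : all (fun i => i < size pi) (map (addn s) idx) ->
   (order_iso [seq nth 0 pi i | i <- map (addn s) idx] sigma <->
    order_iso [seq nth 0 (map (red (take s pi)) (drop s pi)) i | i <- idx] sigma).
  move=> A.
  have -> : [seq nth 0 (map (red (take s pi)) (drop s pi)) i | i <- idx] =
            map (red (take s pi)) [seq nth 0 pi i | i <- map (addn s) idx].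
    rewrite -!map_comp; apply/eq_in_map => i iI /=.
    move: A; rewrite all_map => /allP /(_ i iI) /= hi.
    by rewrite (nth_map 0) ?size_drop ?nth_drop //; lia.
  have N : forall x, x \in [seq nth 0 pi i | i <- map (addn s) idx] -> x \notin take s pi.
    move=> x /mapP [j /mapP [i iI ->] ->]; apply: notD => //.
    move: A; rewrite all_map => /allP /(_ i iI) /= hi.
    by rewrite -nth_drop; apply: mem_nth; rewrite size_drop ltn_subRL.
  have := @oi_map_red (take s pi) _ sigma (take_uniq s U) N; tauto.
have Eadj : size idx = size sigma ->
   ((forall x, x \in X -> 1 <= x -> x < size sigma ->
      nth 0 (map (addn s) idx) x = (nth 0 (map (addn s) idx) x.-1).+1) <->
    (forall x, x \in X -> 1 <= x -> x < size sigma ->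
      nth 0 idx x = (nth 0 idx x.-1).+1)).
  move=> Sz; split=> H x xX x1 x2; have := H x xX x1 x2;
    rewrite !(nth_map 0) ?Sz; try lia; move=> e; lia.
split.
- case=> [S1 S2 S3 S4 S5]; rewrite size_map in S1.
  split=> //; [by rewrite -Esort | by rewrite -Eall | by apply/Eoi | by apply/Eadj].
- case=> [S1 S2 S3 S4 S5].
  have A : all (fun i => i < size pi) (map (addn s) idx) by rewrite Eall.
  split=> //; [by rewrite size_map | by rewrite Esort | by apply/Eoi | by apply/Eadj].
Qed.


Lemma perm_image D n u : uniq D -> (forall y, y \in D -> 0 < y <= n) -> uniq u ->
  (forall x, x \in u -> x \notin D /\ 0 < x <= n) -> size u = n - size D ->
  is_perm (n - size D) (map (red D) u).
Proof.
move=> UD RD Uu Ru Su; apply: props_perm.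
- rewrite map_inj_in_uniq // => x y xu yu; apply: red_inj => //.
  + by case: (Ru x xu).
  + by case: (Ru y yu).
- by rewrite size_map.
- move=> z /mapP [x xu ->]; case: (Ru x xu) => nx rx; exact: red_range.
Qed.

Definition compl (D : seq nat) n := [seq x <- iota 1 n | x \notin D].
Definition ext (D : seq nat) n y := nth 0 (compl D n) (index y (map (red D) (compl D n))).

Lemma size_compl D n : uniq D -> (forall y, y \in D -> 0 < y <= n) ->
  size (compl D n) = n - size D.
Proof.
move=> UD RD; rewrite /compl size_filter.
have := count_predC (mem D) (iota 1 n); rewrite size_iota.
have -> : count (mem D) (iota 1 n) = size D.
  rewrite -size_filter; apply: perm_size; apply: uniq_perm.
  - exact/filter_uniq/iota_uniq.
  - exact: UD.
  - move=> x; rewrite mem_filter mem_iota; case xD: (x \in D) => //=.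
    by have := RD x xD => /andP [h1 h2]; rewrite xD h1 add1n ltnS.
    by rewrite xD.
have -> : count (fun x => x \notin D) (iota 1 n) = count (predC (mem D)) (iota 1 n) by [].
move: (count _ _) => c; lia.
Qed.

Lemma ext_spec D n y : uniq D -> (forall y, y \in D -> 0 < y <= n) ->
  0 < y <= n - size D ->
  [/\ ext D n y \notin D, 0 < ext D n y <= n & red D (ext D n y) = y].
Proof.
move=> UD RD yr.
have RC : forall x, x \in compl D n -> x \notin D /\ 0 < x <= n.
  move=> x; rewrite mem_filter mem_iota add1n ltnS => /andP [-> ->]; by [].
have P := @perm_image D n (compl D n) UD RD (filter_uniq _ (iota_uniq 1 n)) RC (size_compl D n UD RD).
have yin : y \in map (red D) (compl D n).
  by rewrite (perm_mem P) mem_iota add1n ltnS.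
have hi : index y (map (red D) (compl D n)) < size (compl D n).
  by rewrite -(size_map (red D)) index_mem.
have xin : ext D n y \in compl D n by apply: mem_nth.
case: (RC _ xin) => nx rx; split=> //.
by rewrite /ext -(nth_map 0 0) // nth_index.
Qed.


Lemma Hcontra (m t k s : nat) (sigma p w pi idx : seq nat) :
  size p = k -> size sigma = t -> m <= t -> s <= k -> size w = k ->
  order_iso w p -> (forall i, i < k -> nth 0 pi i = nth 0 w i) ->
  occ sigma (iota 1 (m - 1)) pi idx -> nth 0 idx 0 < s ->
  (forall a, 1 <= a <= s ->
     ~ order_iso (take m (drop a.-1 p)) (take (minn m (k - a + 1)) sigma)) -> False.
Proof.
move=> Sp St mt sk Sw [_ Hw] Hpre [S1 S2 S3 [_ S4] S5] h0 H.
move: h0 H; set a0 := nth 0 idx 0 => h0 H.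
have cons : forall j, j < m -> j < t -> nth 0 idx j = a0 + j.
  elim=> [|j IH] hj ht; first by rewrite addn0.
  rewrite S5 ?mem_iota ?St //=; try lia.
apply: (H a0.+1); first lia.
have -> : k - a0.+1 + 1 = k - a0 by lia.
rewrite /=; split.
  rewrite !size_take_min size_drop; lia.
move=> i j; rewrite size_take_min size_drop => hi hj.
rewrite !nth_take ?nth_drop; try lia.
rewrite -Hw ?Sw; try lia.
rewrite -!Hpre; try lia.
rewrite -!cons; try lia.
have := S4 i j; rewrite !(nth_map 0) ?size_map ?S1 ?St; try lia.
Qed.


Lemma avoids1 sX pi : avoids [:: sX] pi <-> ~ contains_vinc sX.1 sX.2 pi.
Proof.
split; first by move=> h; apply: h; rewrite mem_head.
by move=> h sX'; rewrite inE => /eqP ->.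
Qed.

Lemma main_gen t k s m (sigma p : seq nat) :
  is_perm t sigma -> is_perm k p -> 1 <= s <= k -> m <= t ->
  (forall a, 1 <= a <= s ->
     ~ order_iso (take m (drop a.-1 p)) (take (minn m (k - a + 1)) sigma)) ->
  rev_deletable k p (iota 1 s) [:: (sigma, iota 1 (m - 1))].
Proof.
move=> Psig Pp /andP [s1 sk] mt H n w [Sw Rw Uw Iw] _.
have [_ St _] := perm_props _ _ Psig.
have [_ Sp _] := perm_props _ _ Pp.
set X := iota 1 (m - 1).
have Rw' : forall y, y \in w -> 0 < y <= n by move=> y hy; exact: (allP Rw y hy).
have kn : k <= n.
  rewrite -Sw -(size_iota 1 n); apply: uniq_leq_size => // y /Rw'.
  by rewrite mem_iota add1n ltnS.
set D := take s w.
have UD : uniq D := take_uniq s Uw.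
have RD : forall y, y \in D -> 0 < y <= n by move=> y hy; apply: Rw'; exact: mem_take hy.
have SD : size D = s by rewrite size_takel ?Sw.
rewrite size_iota.
have takeD : forall pi, SnB n [:: (sigma, X)] w pi -> take s pi = D.
  move=> pi [Ppi _ Hpre]; have [_ Spi _] := perm_props _ _ Ppi.
  apply: (@eq_from_nth _ 0); first by rewrite SD size_takel ?Spi; lia.
  move=> i; rewrite size_takel ?Spi; last lia.
  move=> hi; rewrite !nth_take // Hpre //; lia.
have dRpi : forall pi, SnB n [:: (sigma, X)] w pi ->
    dR (iota 1 s) pi = map (red D) (drop s pi).
  move=> pi Hpi; have [Ppi _ _] := Hpi; have [_ Spi _] := perm_props _ _ Ppi.
  rewrite dR_prefix ?(takeD pi Hpi) // Spi; lia.
have dRw : dR (iota 1 s) w = map (red D) (drop s w) by rewrite dR_prefix ?Sw.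
split.
- move=> pi Hpi; have [Ppi Api Hpre] := Hpi; have [Upi Spi Rpi] := perm_props _ _ Ppi.
  split.
  + rewrite dRpi //; have -> : n - s = n - size D by rewrite SD.
    apply: perm_image => //.
    * exact: drop_uniq.
    * move=> x xd; split; first by rewrite -(takeD pi Hpi); apply: notD.
      by apply: Rpi; exact: mem_drop xd.
    * by rewrite size_drop Spi SD.
  + apply/avoids1 => /= [[idx Hidx]]; apply: (iffLR (avoids1 _ _) Api) => /=.
    exists (map (addn s) idx).
    change (occ sigma X pi (map (addn s) idx)).
    rewrite dRpi // -(takeD pi Hpi) in Hidx.
    by apply/occ_shift => //; rewrite Spi; lia.
  + rewrite dRw dRpi // size_map size_drop Sw => i hi.
    rewrite !(nth_map 0) ?size_drop ?Sw ?Spi; try lia.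
    rewrite !nth_drop Hpre //; lia.
- move=> pi1 pi2 H1 H2; rewrite !dRpi // => E.
  have [P1 _ _] := H1; have [P2 _ _] := H2.
  have [U1 S1 R1] := perm_props _ _ P1; have [U2 S2 R2] := perm_props _ _ P2.
  rewrite -(cat_take_drop s pi1) -(cat_take_drop s pi2) !takeD //; congr (_ ++ _).
  apply: (@eq_from_nth _ 0); first by rewrite !size_drop S1 S2.
  move=> i; rewrite size_drop S1 => hi.
  have := congr1 (fun l => nth 0 l i) E; rewrite !(nth_map 0) ?size_drop ?S1 ?S2 //.
  apply: red_inj => //.
  + by rewrite -(takeD pi1 H1); apply: notD => //; apply: mem_nth; rewrite size_drop S1.
  + by rewrite -(takeD pi2 H2); apply: notD => //; apply: mem_nth; rewrite size_drop S2.
- move=> tau [Ptau Atau Htau]; have [Ut St' Rt] := perm_props _ _ Ptau.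
  set f := ext D n.
  have FS : forall y, y \in tau -> [/\ f y \notin D, 0 < f y <= n & red D (f y) = y].
    by move=> y yt; apply: ext_spec => //; rewrite SD; exact: Rt.
  set pi := D ++ map f tau.
  have tk : take s pi = D by rewrite /pi take_size_cat.
  have dp : drop s pi = map f tau by rewrite /pi drop_size_cat.
  have redf : map (red D) (map f tau) = tau.
    rewrite -map_comp -[RHS]map_id; apply/eq_in_map => y yt /=.
    by case: (FS y yt).
  have Spi : size pi = n by rewrite size_cat SD size_map St'; lia.
  have Upi : uniq pi.
    rewrite cat_uniq UD /=; apply/andP; split.
      by apply/hasPn => z /mapP [y yt ->]; case: (FS y yt).
    rewrite map_inj_in_uniq // => y1 y2 h1 h2 e.
    by case: (FS y1 h1) => _ _ <-; case: (FS y2 h2) => _ _ <-; rewrite e.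
  have Rpi : forall x, x \in pi -> 0 < x <= n.
    move=> x; rewrite mem_cat => /orP [/RD // | /mapP [y yt ->]].
    by case: (FS y yt).
  have Hpre : forall i, i < size w -> nth 0 pi i = nth 0 w i.
    move=> i; rewrite Sw => hi; case: (ltnP i s) => his.
      by rewrite /pi nth_cat SD his nth_take.
    rewrite /pi nth_cat SD ltnNge his /= (nth_map 0); last by rewrite St'; lia.
    rewrite Htau; last by rewrite dRw size_map size_drop Sw; lia.
    rewrite dRw (nth_map 0); last by rewrite size_drop Sw; lia.
    rewrite nth_drop subnKC //.
    have xin : nth 0 w i \in drop s w.
      have -> : nth 0 w i = nth 0 (drop s w) (i - s) by rewrite nth_drop subnKC.
      by apply: mem_nth; rewrite size_drop Sw; lia.
    have nx : nth 0 w i \notin D by apply: notD.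
    have rx : 0 < nth 0 w i <= n by apply: Rw'; apply: mem_nth; rewrite Sw.
    have [ny ry e] := ext_spec D n (red D (nth 0 w i)) UD RD (red_range D n (nth 0 w i) UD RD nx rx).
    exact: (red_inj D _ _ UD ny nx e).
  have Ppi : is_perm n pi by apply: props_perm.
  have dRe : dR (iota 1 s) pi = tau by rewrite dR_prefix ?Spi ?tk ?dp ?redf //; lia.
  exists pi => //; split => //; idtac.
  apply/avoids1 => /= [[idx Hidx]].
  change (occ sigma X pi idx) in Hidx.
  case: (ltnP (nth 0 idx 0) s) => h0.
    have Hpre2 : forall i, i < k -> nth 0 pi i = nth 0 w i by move=> i hi; apply: Hpre; rewrite Sw.
    exact: (@Hcontra m t k s sigma p w pi idx Sp St mt sk Sw Iw Hpre2 Hidx h0 H).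
  have ge : forall i, i \in idx -> s <= i.
    have [_ S2 _ _ _] := Hidx.
    move: S2 h0; case: (idx) => [|a l] //= S2 h0 i; rewrite inE => /orP [/eqP -> //|il].
    have := order_path_min ltn_trans S2 => /allP /(_ i il) ai; lia.
  have E : idx = map (addn s) (map (subn^~ s) idx).
    rewrite -map_comp -{1}(map_id idx); apply/eq_in_map => i /ge /= h; by rewrite subnKC.
  rewrite E in Hidx; move/occ_shift: Hidx; rewrite tk dp redf => Hc.
  apply: (iffLR (avoids1 _ _) Atau) => /=; exists (map (subn^~ s) idx); apply: Hc => //.
  rewrite Spi; lia.
Qed.

Theorem mainTheorem11 (t k s : nat) (sigma p : seq nat) :
  is_perm t sigma -> is_perm k p -> 1 <= s <= k ->
  ((forall a, 1 <= a <= s ->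
      ~ order_iso (take t (drop a.-1 p)) (take (minn t (k - a + 1)) sigma)) ->
     rev_deletable k p (iota 1 s) [:: (sigma, iota 1 (t - 1))]) /\
  ((forall a, 1 <= a <= s ->
      ~ order_iso (take (t - 1) (drop a.-1 p)) (take (minn (t - 1) (k - a + 1)) sigma)) ->
     rev_deletable k p (iota 1 s) [:: (sigma, iota 1 (t - 2))]).
Proof.
move=> Ps Pp hs; split=> H.
- exact: (@main_gen t k s t sigma p Ps Pp hs (leqnn t) H).
- have -> : t - 2 = t - 1 - 1 by rewrite -subnDA.
  exact: (@main_gen t k s (t - 1) sigma p Ps Pp hs (leq_subr 1 t) H).
Qed.
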